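(* Let $M,N:\mathbf{R}^d\to\mathbf{Vec}$ be interval decomposable persistence modules with barcodes $\mathcal{B}(M)$ and $\mathcal{B}(N)$. Then \[d_{\mathrm{I},2d}(\mathrm{rk}(M),\mathrm{rk}(N))\le d_{\mathrm{B}}(\mathcal{B}(M),\mathcal{B}(N)).\]
   Context: $\mathbf{R}^d$ has the product order; a persistence module $M:\mathbf{R}^d\to\mathbf{Vec}$ (vector spaces over a fixed field) consists of spaces $M_\mathbf{a}$ and linear maps $\varphi_M(\mathbf{a},\mathbf{b}):M_\mathbf{a}\to M_\mathbf{b}$ for $\mathbf{a}\le\mathbf{b}$, functorially. For $\varepsilon\ge0$ let $\vec\varepsilon=\varepsilon(1,\dots,1)$. Modules $M,N$ are $\varepsilon$-interleaved if there are natural families $f_\mathbf{a}:M_\mathbf{a}\to N_{\mathbf{a}+\vec\varepsilon}$, $g_\mathbf{a}:N_\mathbf{a}\to M_{\mathbf{a}+\vec\varepsilon}$ with $g_{\mathbf{a}+\vec\varepsilon}f_\mathbf{a}=\varphi_M(\mathbf{a},\mathbf{a}+2\vec\varepsilon)$ and $f_{\mathbf{a}+\vec\varepsilon}g_\mathbf{a}=\varphi_N(\mathbf{a},\mathbf{a}+2\vec\varepsilon)$. An interval of $\mathbf{R}^d$ is a nonempty subset $J$ that is convex ($\mathbf{a}\le\mathbf{b}\le\mathbf{c}$, $\mathbf{a},\mathbf{c}\in J\Rightarrow\mathbf{b}\in J$) and connected (any two points linked by a finite zigzag of comparable points in $J$); its interval module has the field at points of $J$, zero elsewhere, and identity maps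 within $J$. $M$ is interval decomposable if it is a direct sum of interval modules; its barcode $\mathcal{B}(M)$ is the multiset of these intervals. An $\varepsilon$-matching between barcodes is a partial bijection $\sigma$ such that for each matched pair $(J,\sigma(J))$ the interval modules of $J$ and $\sigma(J)$ are $\varepsilon$-interleaved, and each unmatched interval's module is $\varepsilon$-interleaved with the zero module; $d_{\mathrm{B}}$ is the infimum of $\varepsilon$ admitting an $\varepsilon$-matching. The rank invariant $\mathrm{rk}(M):\mathbf{R}^d\times\mathbf{R}^d\to\mathbf{Z}_+\cup\{\infty\}$ is $\mathrm{rk}(M)(\mathbf{a},\mathbf{b})=\mathrm{rank}\,\varphi_M(\mathbf{a},\mathbf{b})$ if $\mathbf{a}\le\mathbf{b}$ and $\infty$ otherwise. For $F,G:\mathbf{R}^d\times\mathbf{R}^d\to\mathbf{Z}_+\cup\{\infty\}$, $d_{\mathrm{I},2d}(F,G):=\inf\{\varepsilon\ge0:\forall(\mathbf{a},\mathbf{b}),\ F(\mathbf{a},\mathbf{b})\ge G(\mathbf{a}-\vec\varepsilon,\mathbf{b}+\vec\varepsilon)\text{ and }G(\mathbf{a},\mathbf{b})\ge F(\mathbf{a}-\vec\varepsilon,\mathbf{b}+\vec\varepsilon)\}$. *)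

(* Defs.v *)
From HB Require Import structures.
From mathcomp Require Import all_boot all_order all_algebra.
From mathcomp Require Import boolp classical_sets reals ereal Rstruct.
From Stdlib Require Import Rdefinitions.

Set Implicit Arguments. Unset Strict Implicit. Unset Printing Implicit Defensive.
Import Order.TTheory GRing.Theory Num.Theory.
Local Open Scope ring_scope.
Local Open Scope classical_set_scope.

Definition pt (d : nat) := 'I_d -> R.
Definition le_pt d (a b : pt d) : Prop := forall i, a i <= b i.
Definition shift d (e : R) (a : pt d) : pt d := fun i => a i + e.

Section Modules.
Variables (K : fieldType) (d : nat).

(** A (pre)persistence module: spaces and linear structure maps phi(a,b);
    only the maps for a <= b are meaningful. *)
Record pmod := PMod {
  sp : pt d -> lmodType K;
  mp : forall a b : pt d, {linear sp a -> sp b}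
}.

Definition is_pmod (M : pmod) : Prop :=
  (forall a v, le_pt a a -> mp M a a v = v) /\
  (forall a b c v, le_pt a b -> le_pt b c ->
     mp M a c v = mp M b c (mp M a b v)).

Definition interleaved (M N : pmod) (e : R) : Prop :=
  exists (f : forall a, {linear sp M a -> sp N (shift e a)})
         (g : forall a, {linear sp N a -> sp M (shift e a)}),
    (forall a b v, le_pt a b ->
        f b (mp M a b v) = mp N (shift e a) (shift e b) (f a v)) /\
    (forall a b v, le_pt a b ->
        g b (mp N a b v) = mp M (shift e a) (shift e b) (g a v)) /\
    (forall a v, g (shift e a) (f a v) = mp M a (shift e (shift e a)) v) /\
    (forall a v, f (shift e a) (g a v) = mp N a (shift e (shift e a)) v).

Definition zigzag_connected (J : set (pt d)) : Prop :=
  forall a b, J a -> J b ->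
    exists (n : nat) (x : nat -> pt d),
      x 0%N = a /\ x n = b /\ (forall i : nat, leq i n -> J (x i)) /\
      (forall i : nat, leq i.+1 n -> le_pt (x i) (x i.+1) \/ le_pt (x i.+1) (x i)).

Definition is_interval (J : set (pt d)) : Prop :=
  (exists a, J a) /\
  (forall a b c, J a -> J c -> le_pt a b -> le_pt b c -> J b) /\
  zigzag_connected J.

(** The interval module of J: the field K (= 'rV_1) at points of J, the zero
    space (= 'rV_0) elsewhere, identity maps inside J (and zero maps otherwise). *)
Definition imod (J : set (pt d)) : pmod :=
  @PMod (fun a => 'rV[K]_(asbool (J a)))
        (fun a b => mulmxr (pid_mx 1)).

Definition zero_mod : pmod := imod set0.

(** Interval decomposability: M is the (internal) direct sum of interval
    submodules indexed by L, the l-th one having support J l and spanned at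
    a point a of J l by e l a.  The family (L, J) is then the barcode. *)
Definition is_interval_decomposition (M : pmod) (L : Type) (J : L -> set (pt d)) : Prop :=
  (forall l, is_interval (J l)) /\
  exists e : forall (l : L) (a : pt d), sp M a,
    (forall l a b, le_pt a b -> J l a -> J l b -> mp M a b (e l a) = e l b) /\
    (forall l a b, le_pt a b -> J l a -> ~ J l b -> mp M a b (e l a) = 0) /\
    (forall a (n : nat) (l : 'I_n -> L), injective l -> (forall i, J (l i) a) ->
       forall c : 'I_n -> K, \sum_(i < n) c i *: e (l i) a = 0 -> forall i, c i = 0) /\
    (forall a (v : sp M a), exists (n : nat) (l : 'I_n -> L) (c : 'I_n -> K),
       (forall i, J (l i) a) /\ v = \sum_(i < n) c i *: e (l i) a).

(** epsilon-matchings between barcodes (multisets given as indexed families). *)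
Definition is_matching (L L' : Type) (s : L -> L' -> Prop) : Prop :=
  (forall x y y', s x y -> s x y' -> y = y') /\
  (forall x x' y, s x y -> s x' y -> x = x').

Definition eps_matching (L L' : Type) (J : L -> set (pt d)) (J' : L' -> set (pt d))
    (e : R) (s : L -> L' -> Prop) : Prop :=
  is_matching s /\
  (forall x y, s x y -> interleaved (imod (J x)) (imod (J' y)) e) /\
  (forall x, (forall y, ~ s x y) -> interleaved (imod (J x)) zero_mod e) /\
  (forall y, (forall x, ~ s x y) -> interleaved (imod (J' y)) zero_mod e).

(** Bottleneck distance (inf over the empty set is +oo). *)
Definition d_B (L L' : Type) (J : L -> set (pt d)) (J' : L' -> set (pt d)) : \bar R :=
  ereal_inf [set (e%:E)%E | e in
    [set e : R | 0 <= e /\ exists s : L -> L' -> Prop, eps_matching J J' e s]].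

(** Rank of a linear map between arbitrary vector spaces, in Z_+ u {oo}
    (None = oo). rank_ge f n : the image contains n linearly independent vectors. *)
Definition lin_indep (V : lmodType K) (n : nat) (w : 'I_n -> V) : Prop :=
  forall c : 'I_n -> K, \sum_(i < n) c i *: w i = 0 -> forall i, c i = 0.

Definition rank_ge (U V : lmodType K) (f : U -> V) (n : nat) : Prop :=
  exists v : 'I_n -> U, lin_indep (fun i => f (v i)).

Definition rank (U V : lmodType K) (f : U -> V) : option nat :=
  if pselect (forall n, rank_ge f n) then None
  else Some (xget 0%N [set n | rank_ge f n /\ ~ rank_ge f n.+1]).

Definition rk (M : pmod) (a b : pt d) : option nat :=
  if pselect (le_pt a b) then rank (mp M a b) else None.

End Modules.

Definition le_natinf (x y : option nat) : bool :=
  match x, y with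
  | _, None => true
  | None, Some _ => false
  | Some m, Some n => leq m n
  end.

Definition d_I2d (d : nat) (F G : pt d -> pt d -> option nat) : \bar R :=
  ereal_inf [set (e%:E)%E | e in
    [set e : R | 0 <= e /\ forall a b : pt d,
       le_natinf (G (shift (- e) a) (shift e b)) (F a b) /\
       le_natinf (F (shift (- e) a) (shift e b)) (G a b)]].

(* Main.v *)
Require Import Defs.
From mathcomp Require Import all_boot all_order all_algebra.
From mathcomp Require Import boolp classical_sets reals ereal Rstruct.
Set Implicit Arguments. Unset Strict Implicit. Unset Printing Implicit Defensive.
Import Order.TTheory GRing.Theory Num.Theory.
Local Open Scope ring_scope.

Lemma span_le (K : fieldType) (V : lmodType K) k n (w : 'I_k -> V) (u : 'I_n -> V)
  (C : 'I_n -> 'I_k -> K) :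
  lin_indep u -> (forall i, u i = \sum_(d < k) C i d *: w d) -> (n <= k)%N.
Proof.
move=> hu hC.
pose A := \matrix_(i < n, j < k) C i j.
suff : \rank A = n by move=> <-; exact: rank_leq_col.
apply/eqP; rewrite eqn_leq rank_leq_row /=.
rewrite leqNgt; apply/negP => hlt.
have : kermx A != 0.
  by rewrite -mxrank_eq0 mxrank_ker subn_eq0 -ltnNge.
move/rowV0Pn => [x /sub_kermxP hx xn0].
move/negP: xn0; apply.
have h0 : \sum_(i < n) x 0 i *: u i = 0.
  transitivity (\sum_(d < k) (x *m A) 0 d *: w d); last first.
    by rewrite hx big1 // => d _; rewrite mxE scale0r.
  under eq_bigr => i _ do rewrite hC scaler_sumr.
  rewrite exchange_big /=; apply: eq_bigr => d _.
  rewrite mxE scaler_suml; apply: eq_bigr => i _.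
  by rewrite scalerA mxE.
apply/eqP/rowP => i; rewrite mxE.
exact: hu h0 i.
Qed.

Lemma regroup (K : fieldType) (V : lmodType K) m k (c : 'I_m -> K)
  (o : 'I_m -> option 'I_k) (w : 'I_k -> V) :
  \sum_(j < m) c j *: (if o j is Some d then w d else 0) =
  \sum_(d < k) (\sum_(j < m | o j == Some d) c j) *: w d.
Proof.
under [RHS]eq_bigr => d _ do rewrite scaler_suml big_mkcond /=.
rewrite exchange_big /=; apply: eq_bigr => j _.
case: (o j) => [d0|]; last by rewrite scaler0 big1 // => d _.
rewrite (bigD1 d0) //= eqxx big1 ?addr0 // => d hd.
by case: eqP => // -[] /esym/eqP; rewrite (negbTE hd).
Qed.

Definition cov (L : Type) k (D : 'I_k -> L) x := exists d, D d = x.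

Lemma cover_ext (L : Type) (S : L -> Prop) k0 (D0 : 'I_k0 -> L) :
  injective D0 -> (forall d, S (D0 d)) -> forall x,
  exists k (D : 'I_k -> L), [/\ injective D, (forall d, S (D d)),
    (forall d0, cov D (D0 d0)) & (S x -> cov D x)].
Proof.
move=> inj0 S0 x.
have [Sx|] := pselect (S x /\ ~ cov D0 x); last first.
  move=> h; exists k0, D0; split => // [d0|Sx]; first by exists d0.
  by apply: contrapT => ncov; apply: h.
case: Sx => Sx ncov.
pose D (d : 'I_k0.+1) := if unlift ord_max d is Some d' then D0 d' else x.
exists k0.+1, D; split.
- move=> d1 d2; rewrite /D.
  case: unliftP => [d1' ->|->]; case: unliftP => [d2' ->|->] //.
  + by move/inj0 => ->.
  + by move=> e; exfalso; apply: ncov; exists d1'.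
  + by move=> e; exfalso; apply: ncov; exists d2'.
- by move=> d; rewrite /D; case: unliftP.
- by move=> d0; exists (lift ord_max d0); rewrite /D liftK.
- by move=> _; exists ord_max; rewrite /D unlift_none.
Qed.

Lemma cov_trans (L : Type) k0 (D0 : 'I_k0 -> L) k (D : 'I_k -> L) x :
  (forall d0, cov D (D0 d0)) -> cov D0 x -> cov D x.
Proof. by move=> h [d0 <-]; apply: h. Qed.

Lemma cover_fam (L : Type) (S : L -> Prop) m (h : 'I_m -> L) : forall k0 (D0 : 'I_k0 -> L),
  injective D0 -> (forall d, S (D0 d)) ->
  exists k (D : 'I_k -> L), [/\ injective D, (forall d, S (D d)),
    (forall d0, cov D (D0 d0)) & (forall j, S (h j) -> cov D (h j))].
Proof.
elim: m h => [|m IH] h k0 D0 inj0 S0.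
  by exists k0, D0; split => // [d0|[]//]; exists d0.
have [k1 [D1 [inj1 S1 c1 cx]]] := cover_ext inj0 S0 (h ord_max).
have [k [D [inj S' c2 ch]]] := IH (fun j => h (widen_ord (leqnSn m) j)) _ _ inj1 S1.
exists k, D; split => //.
  by move=> d0; apply: cov_trans c2 (c1 d0).
move=> j; have [lt|ge] := ltnP j m.
  have -> : j = widen_ord (leqnSn m) (Ordinal lt) by apply: val_inj.
  exact: ch.
have -> : j = ord_max by apply: val_inj => /=; apply/eqP; rewrite eqn_leq ge -ltnS ltn_ord.
by move=> hs; apply: cov_trans c2 (cx hs).
Qed.

Lemma cover_dfam (L : Type) (S : L -> Prop) n : forall (m : 'I_n -> nat)
  (h : forall i, 'I_(m i) -> L) k0 (D0 : 'I_k0 -> L),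
  injective D0 -> (forall d, S (D0 d)) ->
  exists k (D : 'I_k -> L), [/\ injective D, (forall d, S (D d)),
    (forall d0, cov D (D0 d0)) & (forall i j, S (h i j) -> cov D (h i j))].
Proof.
elim: n => [|n IH] m h k0 D0 inj0 S0.
  by exists k0, D0; split => // [d0|[]//]; exists d0.
have [k1 [D1 [inj1 S1 c1 cx]]] := cover_fam (h ord_max) inj0 S0.
have [k [D [inj S' c2 ch]]] := IH (fun i => m (widen_ord (leqnSn n) i))
   (fun i => h (widen_ord (leqnSn n) i)) _ _ inj1 S1.
exists k, D; split => //.
  by move=> d0; apply: cov_trans c2 (c1 d0).
move=> i; have [lt|ge] := ltnP i n.
  have -> : i = widen_ord (leqnSn n) (Ordinal lt) by apply: val_inj.
  exact: ch.
have -> : i = ord_max by apply: val_inj => /=; apply/eqP; rewrite eqn_leq ge -ltnS ltn_ord.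
by move=> j hs; apply: cov_trans c2 (cx j hs).
Qed.

Lemma span_indep (K : fieldType) (V : lmodType K) (L : Type) (S : L -> Prop) (E : L -> V)
  n (u : 'I_n -> V) :
  lin_indep u ->
  (forall i, exists m (l : 'I_m -> L) (c : 'I_m -> K),
     u i = \sum_(j < m) c j *: (if `[< S (l j) >] then E (l j) else 0)) ->
  exists l : 'I_n -> L, injective l /\ forall i, S (l i).
Proof.
move=> hu hrep.
have : forall i, exists p : {m : nat & ('I_m -> L) * ('I_m -> K)},
   u i = \sum_(j < projT1 p) (projT2 p).2 j *:
      (if `[< S ((projT2 p).1 j) >] then E ((projT2 p).1 j) else 0).
  by move=> i; have [m [l [c h]]] := hrep i; exists (existT _ m (l, c)).
case/choice => P hP.
pose m i := projT1 (P i).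
pose h i : 'I_(m i) -> L := (projT2 (P i)).1.
pose c i : 'I_(m i) -> K := (projT2 (P i)).2.
have D0 : 'I_0 -> L by case=> ?; rewrite ltn0.
have inj0 : injective D0 by case=> ? H; exfalso; move: H; rewrite ltn0.
have S0 : forall d, S (D0 d) by case=> ? H; exfalso; move: H; rewrite ltn0.
have [k [D [inj SD _ hcov]]] := @cover_dfam L S n m h 0 D0 inj0 S0.
have : forall p : {i : 'I_n & 'I_(m i)}, exists o : option 'I_k,
   match o with Some d => D d = h (projT1 p) (projT2 p) | None => ~ S (h (projT1 p) (projT2 p)) end.
  case=> i j /=.
  have [Sx|nS] := pselect (S (h i j)); last by exists None.
  by have [d hd] := hcov i j Sx; exists (Some d).
case/choice => O hO.
have hu' : forall i, u i = \sum_(d < k)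
   (\sum_(j < m i | O (existT _ i j) == Some d) c i j) *: E (D d).
  move=> i; rewrite -regroup hP; apply: eq_bigr => j _.
  have := hO (existT _ i j); rewrite /=.
  case: (O _) => [d hd|nS].
    rewrite /h /c /= in hd *; by rewrite -hd asboolT.
  by rewrite /h /c /= in nS *; rewrite asboolF // scaler0.
have le := span_le hu hu'.
exists (fun i => D (widen_ord le i)); split; last by move=> i; apply: SD.
by move=> i1 i2 /inj /(congr1 val) /= /val_inj.
Qed.

Section Dec.
Local Open Scope classical_set_scope.

Lemma rank_ge_dec (K : fieldType) d (M : pmod K d) (L : Type) (J : L -> set (pt d))
  (dec : is_interval_decomposition M J) a b n :
  le_pt a b -> rank_ge (mp M a b) n ->
  exists l : 'I_n -> L, injective l /\ forall i, J (l i) a /\ J (l i) b.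
Proof.
case: dec => _ [e [h1 [h2 [h3 h4]]]] hab [v hv].
apply: (span_indep (S := fun l => J l a /\ J l b) (E := fun l => e l b) hv).
move=> i; have [m [l [c [hl ->]]]] := h4 a (v i).
exists m, l, c; rewrite linear_sum; apply: eq_bigr => j _; rewrite linearZ /=.
have [hb|hb] := pselect (J (l j) b).
  by rewrite asboolT // h1.
by rewrite asboolF ?h2 //; case.
Qed.

Lemma dec_rank_ge (K : fieldType) d (M : pmod K d) (L : Type) (J : L -> set (pt d))
  (dec : is_interval_decomposition M J) a b n (l : 'I_n -> L) :
  le_pt a b -> injective l -> (forall i, J (l i) a /\ J (l i) b) ->
  rank_ge (mp M a b) n.
Proof.
case: dec => _ [e [h1 [h2 [h3 h4]]]] hab inj hl.
exists (fun i => e (l i) a) => c hc.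
apply: (h3 b n l inj (fun i => (hl i).2)).
rewrite -[RHS]hc; apply: eq_bigr => i _; rewrite h1 //; by case: (hl i).
Qed.

Lemma rV0 (K : fieldType) n (x : 'rV[K]_n) : n = 0%N -> x = 0.
Proof. by move=> hn; apply/rowP => j; exfalso; have := ltn_ord j; move: (nat_of_ord j); rewrite hn. Qed.

Lemma const_pid_neq0 (K : fieldType) n m : n = 1%N -> m = 1%N ->
  (const_mx 1 : 'rV[K]_n) *m (pid_mx 1 : 'M_(n, m)) != 0.
Proof.
move=> hn hm; subst n m; rewrite pid_mx_1 mulmx1.
by apply/eqP => /rowP /(_ 0); rewrite !mxE; apply/eqP; exact: oner_neq0.
Qed.

Lemma imod_inter (K : fieldType) d (J1 J2 : set (pt d)) e p :
  interleaved (imod K J1) (imod K J2) e -> J2 p -> J2 (shift e (shift e p)) ->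
  J1 (shift e p).
Proof.
case=> f [g [_ [_ [_ hfg]]]] h1 h2.
apply: contrapT => n1.
have := hfg p (const_mx 1).
rewrite (@rV0 K _ (g p (const_mx 1)) (ltac:(by rewrite asboolF))) linear0 /= => /esym/eqP; apply/negP.
by apply: const_pid_neq0; rewrite asboolT.
Qed.

End Dec.

Section Rank.
Local Open Scope classical_set_scope.
Variable K : fieldType.

Lemma rank_ge0 (U V : lmodType K) (f : U -> V) : rank_ge f 0.
Proof. by exists (fun _ => 0) => c _ []. Qed.

Lemma rank_geS (U V : lmodType K) (f : U -> V) n : rank_ge f n.+1 -> rank_ge f n.
Proof.
case=> v hv; exists (fun i => v (widen_ord (leqnSn n) i)) => c hc i.
pose c' (j : 'I_n.+1) := if unlift ord_max j is Some j' then c j' else 0.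
have hw : forall i : 'I_n, unlift ord_max (widen_ord (leqnSn n) i) = Some i.
  move=> k; rewrite (_ : widen_ord _ k = lift ord_max k) ?liftK //.
  by apply: val_inj; rewrite /= /bump leqNgt ltn_ord.
have := hv c' _ (widen_ord (leqnSn n) i); rewrite /c' hw; apply.
rewrite big_ord_recr /= unlift_none scale0r addr0 -[RHS]hc.
by apply: eq_bigr => k _; rewrite hw.
Qed.

Lemma rank_ge_le (U V : lmodType K) (f : U -> V) m n : rank_ge f n -> (m <= n)%N -> rank_ge f m.
Proof.
elim: n => [|n IH] h; first by rewrite leqn0 => /eqP ->.
by rewrite leq_eqVlt => /orP [/eqP ->//|]; rewrite ltnS; apply: IH; apply: rank_geS.
Qed.

Lemma rank_spec (U V : lmodType K) (f : U -> V) :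
  (rank f = None /\ forall n, rank_ge f n) \/
  exists N, rank f = Some N /\ forall k, rank_ge f k <-> (k <= N)%N.
Proof.
rewrite /rank; case: pselect => [h|h]; first by left.
right.
have ex : exists N, rank_ge f N /\ ~ rank_ge f N.+1.
  have [n hn] : exists n, ~ rank_ge f n.
    by apply: contrapT => hh; apply: h => n; apply: contrapT => hn; apply: hh; exists n.
  elim: n hn => [|n IH] hn; first by exfalso; apply: hn; apply: rank_ge0.
  have [hr|hr] := pselect (rank_ge f n); first by exists n.
  exact: IH.
set N := xget _ _; exists N; split => //.
have [hN1 hN2] : rank_ge f N /\ ~ rank_ge f N.+1 by apply: (xgetPex 0%N ex).
move=> k; split => [hk|hk]; last exact: rank_ge_le hN1 hk.
rewrite leqNgt; apply/negP => lt; apply: hN2; exact: rank_ge_le hk lt.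
Qed.

Lemma rank_le (U V U' V' : lmodType K) (f : U -> V) (g : U' -> V') :
  (forall n, rank_ge f n -> rank_ge g n) -> le_natinf (rank f) (rank g).
Proof.
move=> h.
case: (rank_spec g) => [[-> _]|[Ng [-> hg]]]; first by case: (rank f).
case: (rank_spec f) => [[_ hf]|[Nf [-> hf]]].
  by exfalso; have := (hg Ng.+1).1 (h _ (hf Ng.+1)); rewrite ltnn.
by apply: (hg Nf).1; apply: h; apply/(hf Nf).2.
Qed.

End Rank.

From mathcomp Require Import lra.

Section Main.
Local Open Scope classical_set_scope.

Lemma interleaved_sym (K : fieldType) d (M N : pmod K d) e :
  interleaved M N e -> interleaved N M e.
Proof. by case=> f [g [h1 [h2 [h3 h4]]]]; exists g, f. Qed.

Lemma eps_matching_sym (K : fieldType) d (L L' : Type) (J : L -> set (pt d))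
  (J' : L' -> set (pt d)) e s :
  eps_matching K J J' e s -> eps_matching K J' J e (fun y x => s x y).
Proof.
case=> [[m1 m2] [h1 [h2 h3]]]; split; first by split => ? ? ?; [apply: m2|apply: m1].
split; first by move=> x y /h1 /interleaved_sym.
by split.
Qed.

Lemma shiftK d (e : Rdefinitions.R) (a : pt d) : shift e (shift (- e) a) = a.
Proof. by apply: funext => i; rewrite /shift addrNK. Qed.

Lemma main_dir (K : fieldType) d (M N : pmod K d) (L : Type) (J : L -> set (pt d))
  (decM : is_interval_decomposition M J)
  (L' : Type) (J' : L' -> set (pt d)) (decN : is_interval_decomposition N J')
  (e : Rdefinitions.R) s (he : 0 <= e) (hs : eps_matching K J J' e s) a b :
  le_natinf (rk N (shift (- e) a) (shift e b)) (rk M a b).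
Proof.
rewrite {2}/rk; case: pselect => hab; last by case: (rk _ _ _).
rewrite /rk.
have hab' : le_pt (shift (- e) a) (shift e b).
  by move=> i; rewrite /shift; have := hab i; lra.
destruct (pselect (le_pt (shift (- e) a) (shift e b))) as [hh|nh]; last by exfalso; apply: nh.
 apply: rank_le => n /(rank_ge_dec decN hab') [l' [inj' hl']].
have conv : forall i x, le_pt (shift (- e) a) x -> le_pt x (shift e b) -> J' (l' i) x.
  move=> i x h1 h2; case: (decN.1 (l' i)) => _ [hc _].
  by apply: (hc _ _ _ (hl' i).1 (hl' i).2).
case: hs => [[m1 m2] [hm [_ hz]]].
have : forall i, exists x, s x (l' i).
  move=> i; apply: contrapT => hn.
  have hz' := hz (l' i) (fun x hx => hn (ex_intro _ x hx)).
  have := imod_inter (interleaved_sym hz') (hl' i).1 (conv i _ _ _).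
  apply.
  - by move=> j; rewrite /shift; lra.
  - by move=> j; rewrite /shift; have := hab j; lra.
case/choice => x hx.
apply: (dec_rank_ge decM (l := x) hab).
  move=> i1 i2 e12; apply: inj'; apply: (m1 (x i1)); first exact: hx.
  by rewrite e12; apply: hx.
move=> i; have hI := interleaved_sym (hm _ _ (hx i)).
split.
  rewrite -(shiftK e a); apply: (imod_inter (interleaved_sym hI)) (hl' i).1 _.
  apply: conv => j; rewrite /shift; first lra.
  by have := hab j; lra.
rewrite -(shiftK e b); apply: (imod_inter (interleaved_sym hI)).
  by apply: conv => j; rewrite /shift; have := hab j; lra.
apply: conv => j; rewrite /shift; first by have := hab j; lra.
lra.
Qed.

End Main.

Theorem corollary6p4 (K : fieldType) (d : nat) (M N : pmod K d)
  (HM : is_pmod M) (HN : is_pmod N)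
  (L : Type) (J : L -> set (pt d)) (decM : is_interval_decomposition M J)
  (L' : Type) (J' : L' -> set (pt d)) (decN : is_interval_decomposition N J') :
  (d_I2d (rk M) (rk N) <= d_B K J J')%E.
Proof.
rewrite /d_I2d /d_B; apply: ereal_inf_le_tmp => _ [e [he [s hs]] <-].
exists e => //; split => // a b; split.
  exact: (main_dir decM decN he hs).
exact: (main_dir decN decM he (eps_matching_sym hs)).
Qed.
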